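(* Let $k$ be a field of characteristic $\neq 2$, let $\mathcal O$ be the Lie algebra described in the context, and let $\mathcal I$ be a maximal (proper) ideal of $\mathcal O$. Then the quotient $\mathcal O/\mathcal I$ is either a one-dimensional Lie algebra over $k$, or a three-dimensional simple Lie algebra over a finite field extension of $k$.
   Context: $\mathcal O$ is the Lie algebra over $k$ which is a free $k[t]$-module with basis $v_0,v_1,v_2$, with $k[t]$-bilinear bracket determined by $[v_0,v_1]=-v_2(t-1)$, $[v_1,v_2]=-v_0$, $[v_2,v_0]=v_1t$ (it is isomorphic to the Onsager algebra, the Lie algebra over $k$ with generators $A,B$ and relations $[A,[A,[A,B]]]=4[A,B]$, $[B,[B,[B,A]]]=4[B,A]$). *)

(* Defs.v *)
From HB Require Import structures.
From mathcomp Require Import all_boot all_order all_algebra all_field.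
Set Implicit Arguments. Unset Strict Implicit. Unset Printing Implicit Defensive.
Import GRing.Theory.
Local Open Scope ring_scope.

(* The Onsager algebra O: the free k[t]-module with basis v0,v1,v2,
   elements represented as row vectors of coordinates (u0,u1,u2). *)
Definition Ons (k : fieldType) := 'rV[{poly k}]_3.

Definition oc (k : fieldType) (u : Ons k) (i : nat) : {poly k} := u 0 (inord i).

(* k[t]-bilinear bracket with [v0,v1] = -v2 (t-1), [v1,v2] = -v0,
   [v2,v0] = v1 t. *)
Definition ons_bracket (k : fieldType) (u w : Ons k) : Ons k :=
  \row_(i < 3)
    nth 0 [:: - (oc u 1 * oc w 2 - oc u 2 * oc w 1);
              (oc u 2 * oc w 0 - oc u 0 * oc w 2) * 'X;
              - ((oc u 0 * oc w 1 - oc u 1 * oc w 0) * ('X - 1))] i.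

Definition ons_scale (k : fieldType) (a : k) (u : Ons k) : Ons k := a%:P *: u.

Definition ons_ideal (k : fieldType) (I : Ons k -> Prop) : Prop :=
  [/\ I 0,
      (forall x y, I x -> I y -> I (x + y)),
      (forall (a : k) x, I x -> I (ons_scale a x)) &
      (forall x y, I y -> I (ons_bracket x y))].

Definition ons_maximal_ideal (k : fieldType) (I : Ons k -> Prop) : Prop :=
  [/\ ons_ideal I,
      (exists x, ~ I x) &
      (forall J, ons_ideal J -> (forall x, I x -> J x) ->
                 (forall x, J x -> I x) \/ (forall x, J x))].

Definition lie_bracket_on (K : fieldType) (V : lmodType K)
  (br : V -> V -> V) : Prop :=
  [/\ (forall (c : K) u v w, br (c *: u + v) w = c *: br u w + br v w),
      (forall (c : K) u v w, br w (c *: u + v) = c *: br w u + br w v),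
      (forall u, br u u = 0) &
      (forall u v w, br u (br v w) + br v (br w u) + br w (br u v) = 0)].

Definition simple_lie (K : fieldType) (V : lmodType K)
  (br : V -> V -> V) : Prop :=
  [/\ lie_bracket_on br,
      (exists u v, br u v != 0) &
      (forall J : V -> Prop,
         J 0 -> (forall u v, J u -> J v -> J (u + v)) ->
         (forall (c : K) u, J u -> J (c *: u)) ->
         (forall u v, J v -> J (br u v)) ->
         (forall u, J u -> u = 0) \/ (forall u, J u))].

(* O/I is a one-dimensional k-vector space: there is a surjective k-linear
   map O -> k with kernel exactly I. *)
Definition quotient_dim1 (k : fieldType) (I : Ons k -> Prop) : Prop :=
  exists f : Ons k -> k,
    [/\ (forall x y, f (x + y) = f x + f y),
        (forall (a : k) x, f (ons_scale a x) = a * f x),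
        (forall c : k, exists x, f x = c) &
        (forall x, f x = 0 <-> I x)].

(* O/I is (as a Lie algebra over k) a three-dimensional simple Lie algebra
   over the finite field extension K of k: there is a surjective k-linear map
   phi : O -> K^3 with kernel I, intertwining the bracket of O with a
   K-Lie bracket br on K^3 that is simple over K. *)
Definition quotient_simple3_over (k : fieldType) (K : fieldExtType k)
  (I : Ons k -> Prop) : Prop :=
  exists (phi : Ons k -> 'rV[K]_3) (br : 'rV[K]_3 -> 'rV[K]_3 -> 'rV[K]_3),
    [/\ (forall x y, phi (x + y) = phi x + phi y),
        (forall (a : k) x, phi (ons_scale a x) = (a%:A : K) *: phi x),
        (forall v, exists x, phi x = v) /\ (forall x, phi x = 0 <-> I x),
        (forall x y, phi (ons_bracket x y) = br (phi x) (phi y)) &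
        simple_lie br].

(* Main.v *)
Require Import Defs.
From HB Require Import structures.
From mathcomp Require Import all_boot all_order all_algebra all_field.
From mathcomp Require Import ring zify.
From Stdlib Require Import Classical.
Set Implicit Arguments. Unset Strict Implicit. Unset Printing Implicit Defensive.
Import GRing.Theory.
Local Open Scope ring_scope.

Section Tw.
Variable R : comNzRingType.
Definition c3 (u : 'rV[R]_3) (i : nat) : R := u 0 (inord i).
Definition mk3 (a b c : R) : 'rV[R]_3 := \row_(i < 3) nth 0 [:: a; b; c] i.
Lemma c3mk0 a b c : c3 (mk3 a b c) 0 = a. Proof. by rewrite /c3 mxE inordK. Qed.
Lemma c3mk1 a b c : c3 (mk3 a b c) 1 = b. Proof. by rewrite /c3 mxE inordK. Qed.
Lemma c3mk2 a b c : c3 (mk3 a b c) 2 = c. Proof. by rewrite /c3 mxE inordK. Qed.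
Lemma mk3E u : u = mk3 (c3 u 0) (c3 u 1) (c3 u 2).
Proof.
apply/rowP => i; rewrite mxE /c3; case: i => [[|[|[|]]] Hi] //=;
  by congr (u 0 _); apply/val_inj; rewrite /= inordK.
Qed.
Lemma mk3_eq u w : c3 u 0 = c3 w 0 -> c3 u 1 = c3 w 1 -> c3 u 2 = c3 w 2 -> u = w.
Proof. by move=> h0 h1 h2; rewrite (mk3E u) (mk3E w) h0 h1 h2. Qed.
Lemma c3D u w i : c3 (u + w) i = c3 u i + c3 w i. Proof. by rewrite /c3 mxE. Qed.
Lemma c3B u w i : c3 (u - w) i = c3 u i - c3 w i. Proof. by rewrite /c3 !mxE. Qed.
Lemma c3N u i : c3 (- u) i = - c3 u i. Proof. by rewrite /c3 mxE. Qed.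
Lemma c3Z a u i : c3 (a *: u) i = a * c3 u i. Proof. by rewrite /c3 mxE. Qed.
Lemma c30 i : c3 0 i = 0. Proof. by rewrite /c3 mxE. Qed.

Definition tbr (d0 d1 d2 : R) (u w : 'rV[R]_3) : 'rV[R]_3 :=
  mk3 (d0 * (c3 u 1 * c3 w 2 - c3 u 2 * c3 w 1))
      (d1 * (c3 u 2 * c3 w 0 - c3 u 0 * c3 w 2))
      (d2 * (c3 u 0 * c3 w 1 - c3 u 1 * c3 w 0)).

Definition c3E := (c3D, c3B, c3N, c3Z, c30, c3mk0, c3mk1, c3mk2).

Ltac comp := apply: mk3_eq; rewrite /tbr ?c3E; ring.

Variables d0 d1 d2 : R.
Lemma tbr_linl c u v w : tbr d0 d1 d2 (c *: u + v) w = c *: tbr d0 d1 d2 u w + tbr d0 d1 d2 v w.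
Proof. comp. Qed.
Lemma tbr_linr c u v w : tbr d0 d1 d2 w (c *: u + v) = c *: tbr d0 d1 d2 w u + tbr d0 d1 d2 w v.
Proof. comp. Qed.
Lemma tbr_alt u : tbr d0 d1 d2 u u = 0.
Proof. comp. Qed.
Lemma tbr_jac u v w : tbr d0 d1 d2 u (tbr d0 d1 d2 v w) + tbr d0 d1 d2 v (tbr d0 d1 d2 w u) + tbr d0 d1 d2 w (tbr d0 d1 d2 u v) = 0.
Proof. comp. Qed.
End Tw.

Ltac comp := apply: mk3_eq; rewrite /tbr ?c3E; ring.

Definition e0 (R : comNzRingType) : 'rV[R]_3 := mk3 1 0 0.
Definition e1 (R : comNzRingType) : 'rV[R]_3 := mk3 0 1 0.
Definition e2 (R : comNzRingType) : 'rV[R]_3 := mk3 0 0 1.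

Lemma obrE (k : fieldType) (u w : Ons k) :
  ons_bracket u w = tbr (-1) 'X (-('X - 1)) u w.
Proof.
have -> : ons_bracket u w = mk3 (- (c3 u 1 * c3 w 2 - c3 u 2 * c3 w 1))
   ((c3 u 2 * c3 w 0 - c3 u 0 * c3 w 2) * 'X)
   (- ((c3 u 0 * c3 w 1 - c3 u 1 * c3 w 0) * ('X - 1))) by [].
comp.
Qed.

Lemma osE (k : fieldType) (a : k) (u : Ons k) : ons_scale a u = a%:P *: u.
Proof. by []. Qed.

Section OLemmas.
Lemma obrZl (k : fieldType) (p : {poly k}) (u w : Ons k) :
  ons_bracket (p *: u) w = p *: ons_bracket u w.
Proof. rewrite !obrE; comp. Qed.
Lemma obrZr (k : fieldType) (p : {poly k}) (u w : Ons k) :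
  ons_bracket u (p *: w) = p *: ons_bracket u w.
Proof. rewrite !obrE; comp. Qed.
Lemma obrDr (k : fieldType) (u v w : Ons k) :
  ons_bracket u (v + w) = ons_bracket u v + ons_bracket u w.
Proof. rewrite !obrE; comp. Qed.
Lemma obr0r (k : fieldType) (u : Ons k) : ons_bracket u 0 = 0.
Proof. rewrite !obrE; comp. Qed.
Lemma obrC (k : fieldType) (u w : Ons k) : ons_bracket u w = - ons_bracket w u.
Proof. rewrite !obrE; comp. Qed.
Lemma obrJ (k : fieldType) (u x w : Ons k) :
  ons_bracket u (ons_bracket x w) =
  ons_bracket x (ons_bracket u w) + ons_bracket (ons_bracket u x) w.
Proof. rewrite !obrE; comp. Qed.
End OLemmas.

Lemma idl0 (k : fieldType) (I : Ons k -> Prop) : ons_ideal I -> I 0.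
Proof. by case. Qed.
Lemma idlD (k : fieldType) (I : Ons k -> Prop) x y : ons_ideal I -> I x -> I y -> I (x + y).
Proof. by case=> _ h _ _; apply: h. Qed.
Lemma idlS (k : fieldType) (I : Ons k -> Prop) (a : k) x : ons_ideal I -> I x -> I (a%:P *: x).
Proof. by case=> _ _ h _; apply: h. Qed.
Lemma idlB (k : fieldType) (I : Ons k -> Prop) x y : ons_ideal I -> I y -> I (ons_bracket x y).
Proof. by case=> _ _ _ h; apply: h. Qed.
Lemma idlN (k : fieldType) (I : Ons k -> Prop) x : ons_ideal I -> I x -> I (- x).
Proof. move=> hI hx; have := idlS (-1) hI hx; by rewrite polyCN scaleNr scale1r. Qed.
Lemma idlBl (k : fieldType) (I : Ons k -> Prop) x y : ons_ideal I -> I x -> I (ons_bracket x y).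
Proof. by move=> hI hx; rewrite obrC; apply: idlN => //; apply: idlB. Qed.
Lemma idlSub (k : fieldType) (I : Ons k -> Prop) x y : ons_ideal I -> I x -> I y -> I (x - y).
Proof. by move=> hI hx hy; apply: idlD => //; apply: idlN. Qed.

Definition alpha (k : fieldType) (x : Ons k) : k := (c3 x 1).[0].
Definition beta (k : fieldType) (x : Ons k) : k := (c3 x 2).[1].

Lemma alphaD (k : fieldType) (x y : Ons k) : alpha (x + y) = alpha x + alpha y.
Proof. by rewrite /alpha c3D hornerD. Qed.
Lemma betaD (k : fieldType) (x y : Ons k) : beta (x + y) = beta x + beta y.
Proof. by rewrite /beta c3D hornerD. Qed.
Lemma alphaB (k : fieldType) (x y : Ons k) : alpha (x - y) = alpha x - alpha y.
Proof. by rewrite /alpha c3B hornerD hornerN. Qed.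
Lemma betaB (k : fieldType) (x y : Ons k) : beta (x - y) = beta x - beta y.
Proof. by rewrite /beta c3B hornerD hornerN. Qed.
Lemma alphaS (k : fieldType) a (x : Ons k) : alpha (a%:P *: x) = a * alpha x.
Proof. by rewrite /alpha c3Z hornerCM. Qed.
Lemma betaS (k : fieldType) a (x : Ons k) : beta (a%:P *: x) = a * beta x.
Proof. by rewrite /beta c3Z hornerCM. Qed.
Lemma alpha_mk (k : fieldType) (a b c : {poly k}) : alpha (mk3 a b c) = b.[0].
Proof. by rewrite /alpha c3mk1. Qed.
Lemma beta_mk (k : fieldType) (a b c : {poly k}) : beta (mk3 a b c) = c.[1].
Proof. by rewrite /beta c3mk2. Qed.

Lemma caseA_ker (k : fieldType) (I : Ons k -> Prop) x : ons_ideal I ->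
  (forall x y, I (ons_bracket x y)) -> alpha x = 0 -> beta x = 0 -> I x.
Proof.
move=> hI hab ha hb.
have /factor_theorem [q1 Hq1] : root (c3 x 1) 0 by rewrite /root -/(alpha x) ha.
have /factor_theorem [q2 Hq2] : root (c3 x 2) 1 by rewrite /root -/(beta x) hb.
have -> : x = ons_bracket (mk3 0 1 0) (mk3 0 0 (- c3 x 0)) +
   ons_bracket (mk3 0 0 q1) (mk3 1 0 0) + ons_bracket (mk3 (- q2) 0 0) (mk3 0 1 0).
  rewrite !obrE; apply: mk3_eq; rewrite /tbr ?c3E ?Hq1 ?Hq2; ring.
by apply: idlD => //; apply: idlD.
Qed.

Lemma caseA (k : fieldType) (I : Ons k -> Prop) : ons_maximal_ideal I ->
  (forall x y, I (ons_bracket x y)) -> quotient_dim1 I.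
Proof.
case=> hI [x0 hx0] hmax hab.
have K0 := caseA_ker hI hab.
have [[y [hy hne]] | hall] : (exists y, I y /\ (alpha y != 0 \/ beta y != 0)) \/
    (forall y, I y -> alpha y = 0 /\ beta y = 0).
  apply: NNPP => hn; apply: (hn); right => y hy.
  case: (eqVneq (alpha y) 0) => ha; case: (eqVneq (beta y) 0) => hb //;
  by exfalso; apply: (hn); left; exists y; split => //; auto.
- set a0 := alpha y; set b0 := beta y.
  exists (fun x => b0 * alpha x - a0 * beta x); split.
  + by move=> u v; rewrite alphaD betaD; ring.
  + by move=> a u; rewrite osE alphaS betaS; ring.
  + move=> c; case: (eqVneq b0 0) => hb.
      have ha : a0 != 0 by case: hne => //; rewrite -/b0 hb eqxx.
      exists (mk3 0 0 (- (c / a0))%:P); rewrite alpha_mk beta_mk !hornerC hb.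
      by field.
    exists (mk3 0 (c / b0)%:P 0); rewrite alpha_mk beta_mk !hornerC.
    by field.
  + move=> u; split => [hf|hu].
      case: (eqVneq a0 0) => ha.
        have hb : b0 != 0 by case: hne => //; rewrite -/a0 ha eqxx.
        have hau : alpha u = 0.
          move: hf; rewrite ha mul0r subr0 => /eqP; rewrite mulf_eq0 (negbTE hb) /=.
          by move/eqP.
        set c := beta u / b0.
        have -> : u = (u - c%:P *: y) + c%:P *: y by rewrite subrK.
        apply: idlD => //; last by apply: idlS.
        apply: K0; first by rewrite alphaB alphaS -/a0 ha hau; ring.
        by rewrite betaB betaS -/b0 /c; field.
      set c := alpha u / a0.
      have -> : u = (u - c%:P *: y) + c%:P *: y by rewrite subrK.
      apply: idlD => //; last by apply: idlS.
      apply: K0; first by rewrite alphaB alphaS -/a0 /c; field.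
      rewrite betaB betaS -/b0 /c.
      have e : beta u = b0 * alpha u / a0.
        move/eqP: hf; rewrite subr_eq0 => /eqP h'.
        by apply: (mulIf ha); rewrite mulfVK // h' mulrC.
      rewrite e; field => //.
    apply: NNPP => hne2; apply: hx0.
    set D := a0 * beta u - b0 * alpha u.
    have hD : D != 0.
      apply/eqP => hD0; apply: hne2; rewrite -[LHS]opprK.
      have -> : - (b0 * alpha u - a0 * beta u) = D by rewrite /D; ring.
      by rewrite hD0 oppr0.
    set c1 := (alpha x0 * beta u - beta x0 * alpha u) / D.
    set c2 := (a0 * beta x0 - b0 * alpha x0) / D.
    have -> : x0 = (x0 - c1%:P *: y - c2%:P *: u) + c1%:P *: y + c2%:P *: u.
      by rewrite [RHS]addrAC !subrK.
    apply: idlD => //; last by apply: idlS.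
    apply: idlD => //; last by apply: idlS.
    apply: K0.
      by rewrite !alphaB !alphaS -/a0 /c1 /c2 /D; field.
    by rewrite !betaB !betaS -/b0 /c1 /c2 /D; field.
- exfalso.
  have hJ : ons_ideal (fun x : Ons k => beta x = 0).
    split.
    + by rewrite /beta c30 horner0.
    + by move=> u v hu hv; rewrite betaD hu hv addr0.
    + by move=> a u hu; rewrite osE betaS hu mulr0.
    + move=> u v _; by rewrite obrE /tbr beta_mk !hornerE subrr oppr0 mul0r.
  have := hmax _ hJ (fun y hy => (hall y hy).2).
  case=> [h|h].
    have hm : I (mk3 0 1 0) by apply: h; rewrite beta_mk horner0.
    by have := (hall _ hm).1; rewrite alpha_mk hornerC => /eqP; rewrite oner_eq0.
  by move: (h (mk3 0 0 1)); rewrite beta_mk hornerC => /eqP; rewrite oner_eq0.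
Qed.

Lemma Zsub (k : fieldType) (I : Ons k -> Prop) : ons_maximal_ideal I ->
  (exists x y, ~ I (ons_bracket x y)) ->
  forall w, (forall u, I (ons_bracket u w)) -> I w.
Proof.
case=> hI _ hmax [x [y hxy]].
have hZ : ons_ideal (fun w => forall u, I (ons_bracket u w)).
  split.
  + by move=> u; rewrite obr0r; apply: idl0.
  + by move=> a b ha hb u; rewrite obrDr; apply: idlD.
  + by move=> a b hb u; rewrite osE obrZr; apply: idlS.
  + move=> a b hb u; rewrite obrJ; apply: idlD => //; apply: idlB => //.
have hIZ : forall w, I w -> forall u, I (ons_bracket u w) by move=> w hw u; apply: idlB.
case: (hmax _ hZ hIZ) => [//|h].
by exfalso; apply: hxy; apply: h.
Qed.

Lemma modI (k : fieldType) (I : Ons k -> Prop) : ons_maximal_ideal I ->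
  (exists x y, ~ I (ons_bracket x y)) ->
  forall p x, I x -> I (p *: x).
Proof.
move=> hm hn p x hx; apply: (Zsub hm hn) => u.
rewrite obrZr -obrZl; apply: idlB => //; by case: hm.
Qed.

Lemma kerq (k : fieldType) (I : Ons k -> Prop) : ons_maximal_ideal I ->
  (exists x y, ~ I (ons_bracket x y)) ->
  forall q, ~ (forall y, I (q *: y)) -> forall x, I (q *: x) -> I x.
Proof.
move=> hm hn q hq; case: (hm) => hI _ hmax.
have hJ : ons_ideal (fun x : Ons k => I (q *: x)).
  split.
  + by rewrite scaler0; apply: idl0.
  + by move=> a b ha hb; rewrite scalerDr; apply: idlD.
  + by move=> a b hb; rewrite osE scalerA mulrC -scalerA; apply: idlS.
  + by move=> a b hb; rewrite -obrZr; apply: idlB.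
have hIJ : forall y, I y -> I (q *: y) by move=> y hy; apply: (modI hm hn).
case: (hmax _ hJ hIJ) => [//|h].
by exfalso; apply: hq.
Qed.

Lemma Inz (k : fieldType) (I : Ons k -> Prop) : ons_maximal_ideal I ->
  exists x, I x /\ x != 0.
Proof.
move=> hm; case: (hm) => hI [z hz] hmax.
apply: NNPP => hn.
have h0 : forall x, I x -> x = 0.
  move=> x hx; apply: NNPP => hx0; apply: hn; exists x; split => //; exact/eqP.
have hJ : ons_ideal (fun x : Ons k => exists y, x = 'X *: y).
  split.
  + by exists 0; rewrite scaler0.
  + by move=> a b [ya ->] [yb ->]; exists (ya + yb); rewrite scalerDr.
  + by move=> a b [yb ->]; exists (a%:P *: yb); rewrite osE !scalerA mulrC.
  + by move=> a b [yb ->]; exists (ons_bracket a yb); rewrite obrZr.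
have hIJ : forall x, I x -> exists y, x = 'X *: y.
  by move=> x hx; exists x; rewrite (h0 x hx) scaler0.
case: (hmax _ hJ hIJ) => h.
- have : I ('X *: mk3 1 0 0) by apply: h; exists (mk3 1 0 0).
  move/h0 => /(congr1 (fun v => c3 v 0)); rewrite c3Z c3mk0 c30 mulr1 => /eqP.
  by rewrite polyX_eq0.
- have [y hy] := h (mk3 1 0 0).
  move: (congr1 (fun v => c3 v 0) hy); rewrite c3Z c3mk0 => /(congr1 (horner^~ 0)).
  by rewrite hornerM hornerX mul0r hornerC => /eqP; rewrite oner_eq0.
Qed.

Ltac ocomp := rewrite ?obrE /e0 /e1 /e2; apply: mk3_eq; rewrite /tbr ?c3E; ring.

Lemma X_neq0 (k : fieldType) : ('X : {poly k}) != 0.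
Proof. by rewrite polyX_eq0. Qed.
Lemma X1_neq0 (k : fieldType) : ('X - 1 : {poly k}) != 0.
Proof. by rewrite -polyC1 polyXsubC_eq0. Qed.

Lemma basisS (k : fieldType) (I : Ons k -> Prop) : ons_maximal_ideal I ->
  (exists x y, ~ I (ons_bracket x y)) -> forall s,
  I (mk3 s 0 0) -> I (mk3 0 s 0) -> I (mk3 0 0 s) -> forall y, I (s *: y).
Proof.
move=> hm hn s h0 h1 h2 y; have hI : ons_ideal I by case: hm.
have -> : s *: y = c3 y 0 *: mk3 s 0 0 + c3 y 1 *: mk3 0 s 0 + c3 y 2 *: mk3 0 0 s.
  by apply: mk3_eq; rewrite ?c3E; ring.
by apply: idlD => //; [apply: idlD => //|]; apply: (modI hm hn).
Qed.

Lemma Snz (k : fieldType) (I : Ons k -> Prop) : ons_maximal_ideal I ->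
  (exists x y, ~ I (ons_bracket x y)) ->
  exists s, s != 0 /\ forall y, I (s *: y).
Proof.
move=> hm hn; have hI : ons_ideal I by case: hm.
have [x [hx hx0]] := Inz hm.
have MI := modI hm hn.
have BI : forall u v, I v -> I (ons_bracket u v) by move=> u v; apply: idlB.
set q : {poly k} := 'X * ('X - 1).
have hq : q != 0 by rewrite mulf_neq0 ?X_neq0 ?X1_neq0.
have [h0|h0] := eqVneq (c3 x 0) 0; last first.
  set a := - q * c3 x 0.
  have ha : I (mk3 a 0 0).
    have -> : mk3 a 0 0 = ons_bracket (e2 _) (ons_bracket (e2 _) (ons_bracket (e1 _) (ons_bracket (e1 _) x))).
      rewrite /a /q; ocomp.
    by do 4! apply: (BI).
  exists (q * a); split; first by rewrite /a; repeat apply: mulf_neq0; rewrite ?X_neq0 ?X1_neq0 ?oppr_eq0 ?X1_neq0.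
  apply: basisS => //.
  - have -> : mk3 (q * a) 0 0 = q *: mk3 a 0 0 by ocomp.
    by apply: (MI).
  - have -> : mk3 0 (q * a) 0 = ('X - 1) *: ons_bracket (e2 _) (mk3 a 0 0) by rewrite /q; ocomp.
    by apply: (MI); apply: (BI).
  - have -> : mk3 0 0 (q * a) = 'X *: ons_bracket (e1 _) (mk3 a 0 0) by rewrite /q; ocomp.
    by apply: (MI); apply: (BI).
have [h1|h1] := eqVneq (c3 x 1) 0; last first.
  set a := 'X * q * c3 x 1.
  have ha : I (mk3 0 a 0).
    have -> : mk3 0 a 0 = ons_bracket (e2 _) (ons_bracket (e2 _) (ons_bracket (e0 _) (ons_bracket (e0 _) x))).
      rewrite /a /q; ocomp.
    by do 4! apply: (BI).
  exists (q * a); split; first by rewrite /a; repeat apply: mulf_neq0; rewrite ?X_neq0 ?X1_neq0 ?oppr_eq0 ?X1_neq0.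
  apply: basisS => //.
  - have -> : mk3 (q * a) 0 0 = q *: ons_bracket (e2 _) (mk3 0 a 0) by ocomp.
    by apply: (MI); apply: (BI).
  - have -> : mk3 0 (q * a) 0 = q *: mk3 0 a 0 by ocomp.
    by apply: (MI).
  - have -> : mk3 0 0 (q * a) = - 'X *: ons_bracket (e0 _) (mk3 0 a 0) by rewrite /q; ocomp.
    by apply: (MI); apply: (BI).
have [h2|h2] := eqVneq (c3 x 2) 0.
  by exfalso; move/eqP: hx0; apply; rewrite (mk3E x) h0 h1 h2; apply/rowP => i; rewrite !mxE; case: i => [[|[|[|]]] ?].
set a := - ('X - 1) * q * c3 x 2.
have ha : I (mk3 0 0 a).
  have -> : mk3 0 0 a = ons_bracket (e1 _) (ons_bracket (e1 _) (ons_bracket (e0 _) (ons_bracket (e0 _) x))).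
    rewrite /a /q; ocomp.
  by do 4! apply: (BI).
exists (q * a); split; first by rewrite /a; repeat apply: mulf_neq0; rewrite ?X_neq0 ?X1_neq0 ?oppr_eq0 ?X1_neq0.
apply: basisS => //.
- have -> : mk3 (q * a) 0 0 = - q *: ons_bracket (e1 _) (mk3 0 0 a) by ocomp.
  by apply: (MI); apply: (BI).
- have -> : mk3 0 (q * a) 0 = - ('X - 1) *: ons_bracket (e0 _) (mk3 0 0 a) by rewrite /q; ocomp.
  by apply: (MI); apply: (BI).
- have -> : mk3 0 0 (q * a) = q *: mk3 0 0 a by ocomp.
  by apply: (MI).
Qed.

Lemma notI (k : fieldType) (I : Ons k -> Prop) : ons_maximal_ideal I ->
  forall c : k, c != 0 -> ~ (forall y, I (c%:P *: y)).
Proof.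
move=> hm c hc h; case: hm => hI [z hz] _; apply: hz.
have := idlS (c^-1) hI (h z); by rewrite scalerA -polyCM mulVf // scale1r.
Qed.

Lemma Sirr (k : fieldType) (I : Ons k -> Prop) : ons_maximal_ideal I ->
  (exists x y, ~ I (ons_bracket x y)) ->
  exists pi, irreducible_poly pi /\ forall y, I (pi *: y).
Proof.
move=> hm hn; have [s [hs0 hs]] := Snz hm hn.
have KQ := kerq hm hn.
suff H : forall n (p : {poly k}), (size p <= n)%N -> p != 0 -> (forall y, I (p *: y)) ->
   exists pi, irreducible_poly pi /\ forall y, I (pi *: y) by exact: (H _ s (leqnn _)).
elim=> [|n IH] p hsz hp0 hpS.
  by move: hp0; rewrite -size_poly_eq0; move: hsz; case: (size p).
case: (classic (irreducible_poly p)) => hirr; first by exists p.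
have hsz1 : (1 < size p)%N.
  rewrite ltnNge; apply/negP => /size1_polyC hpc.
  apply: (notI hm (c := p`_0)).
    by move: hp0; rewrite {1}hpc polyC_eq0.
  by rewrite -hpc.
have [q [hq1 [hqp hqn]]] : exists q : {poly k}, size q != 1%N /\ q %| p /\ ~ (q %= p).
  apply: NNPP => hne; apply: hirr; split => // q hq1 hqp.
  by apply: NNPP => hqn; apply: hne; exists q.
have hq0 : q != 0 by apply: contra hp0 => /eqP hq; move: hqp; rewrite hq dvd0p.
have hszq : (size q < size p)%N.
  rewrite ltn_neqAle dvdp_leq // andbT dvdp_size_eqp //; exact/negP.
case: (classic (forall y, I (q *: y))) => hqS.
  apply: (IH q) => //; lia.
set r := p %/ q.
have hpr : p = r * q by rewrite /r divpK.
have hr0 : r != 0 by apply: contra hp0 => /eqP hr; rewrite hpr hr mul0r.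
apply: (IH r) => //.
  move: hsz; rewrite hpr size_mul // => hsz.
  have : (1 < size q)%N by move: hq1; rewrite -size_poly_gt0 in hq0; lia.
  move=> h2; move: hsz; rewrite -subn1; move: h2.
  set a := size r; set b := size q; lia.
move=> y; apply: (KQ q hqS); rewrite scalerA mulrC -hpr; exact: hpS.
Qed.

Lemma Jcent (k : fieldType) (I : Ons k -> Prop) : ons_maximal_ideal I ->
  (exists x y, ~ I (ons_bracket x y)) ->
  forall w, (forall u u', I (ons_bracket (ons_bracket u u') w)) -> I w.
Proof.
move=> hm hn; case: (hm) => hI _ hmax.
have hJ : ons_ideal (fun w => forall u u', I (ons_bracket (ons_bracket u u') w)).
  split.
  + by move=> u u'; rewrite obr0r; apply: idl0.
  + by move=> a b ha hb u u'; rewrite obrDr; apply: idlD.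
  + by move=> a b hb u u'; rewrite osE obrZr; apply: idlS.
  + move=> v w hw u u'; rewrite obrJ; apply: idlD => //; by apply: idlB.
have hIJ : forall w, I w -> forall u u', I (ons_bracket (ons_bracket u u') w).
  by move=> w hw u u'; apply: idlB.
case: (hmax _ hJ hIJ) => [//|h].
exfalso; have [x [y hxy]] := hn; apply: hxy.
apply: (Zsub hm hn) => u; rewrite obrC; apply: idlN => //; exact: h.
Qed.

Lemma notX (k : fieldType) (I : Ons k -> Prop) : ons_maximal_ideal I ->
  (exists x y, ~ I (ons_bracket x y)) -> ~ (forall y, I ('X *: y)).
Proof.
move=> hm hn hX; have hI : ons_ideal I by case: hm.
have MI := modI hm hn.
have h0 : I (e0 _).
  apply: (Jcent hm hn) => u u'.
  have -> : ons_bracket (ons_bracket u u') (e0 _) = 'X *: mk3 0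
     (- (c3 u 0 * c3 u' 1 - c3 u 1 * c3 u' 0) * ('X - 1))
     (('X - 1) * (c3 u 2 * c3 u' 0 - c3 u 0 * c3 u' 2)) by ocomp.
  exact: hX.
have h2 : I (e2 _).
  apply: (Jcent hm hn) => u u'.
  have -> : ons_bracket (ons_bracket u u') (e2 _) = 'X *: mk3
     (- (c3 u 2 * c3 u' 0 - c3 u 0 * c3 u' 2))
     (c3 u 1 * c3 u' 2 - c3 u 2 * c3 u' 1) 0 by ocomp.
  exact: hX.
have [x [y hxy]] := hn; apply: hxy.
have -> : ons_bracket x y = c3 (ons_bracket x y) 0 *: e0 _ + c3 (ons_bracket x y) 2 *: e2 _ +
   'X *: mk3 0 (c3 x 2 * c3 y 0 - c3 x 0 * c3 y 2) 0.
  by rewrite !obrE /e0 /e2; apply: mk3_eq; rewrite /tbr ?c3E; ring.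
apply: (idlD hI _ (hX _)).
by apply: (idlD hI); apply: (MI).
Qed.

Lemma notX1 (k : fieldType) (I : Ons k -> Prop) : ons_maximal_ideal I ->
  (exists x y, ~ I (ons_bracket x y)) -> ~ (forall y, I (('X - 1) *: y)).
Proof.
move=> hm hn hX; have hI : ons_ideal I by case: hm.
have MI := modI hm hn.
have h0 : I (e0 _).
  apply: (Jcent hm hn) => u u'.
  have -> : ons_bracket (ons_bracket u u') (e0 _) = ('X - 1) *: mk3 0
     (- (c3 u 0 * c3 u' 1 - c3 u 1 * c3 u' 0) * 'X)
     ('X * (c3 u 2 * c3 u' 0 - c3 u 0 * c3 u' 2)) by ocomp.
  exact: hX.
have h1 : I (e1 _).
  apply: (Jcent hm hn) => u u'.
  have -> : ons_bracket (ons_bracket u u') (e1 _) = ('X - 1) *: mk3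
     (- (c3 u 0 * c3 u' 1 - c3 u 1 * c3 u' 0))
     0 (c3 u 1 * c3 u' 2 - c3 u 2 * c3 u' 1) by ocomp.
  exact: hX.
have [x [y hxy]] := hn; apply: hxy.
have -> : ons_bracket x y = c3 (ons_bracket x y) 0 *: e0 _ + c3 (ons_bracket x y) 1 *: e1 _ +
   ('X - 1) *: mk3 0 0 (- (c3 x 0 * c3 y 1 - c3 x 1 * c3 y 0)).
  by rewrite !obrE /e0 /e1; apply: mk3_eq; rewrite /tbr ?c3E; ring.
apply: (idlD hI _ (hX _)).
by apply: (idlD hI); apply: (MI).
Qed.

Lemma c3map (R S : comNzRingType) (f : R -> S) (x : 'rV[R]_3) i :
  c3 (map_mx f x) i = f (c3 x i).
Proof. by rewrite /c3 mxE. Qed.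

Lemma tbr_simple (K : fieldType) (d0 d1 d2 : K) :
  d0 != 0 -> d1 != 0 -> d2 != 0 -> simple_lie (tbr d0 d1 d2).
Proof.
move=> h0 h1 h2; split.
- split; [exact: tbr_linl | exact: tbr_linr | exact: tbr_alt | exact: tbr_jac].
- exists (e1 K), (e2 K); apply/eqP => /(congr1 (fun v => c3 v 0)).
  rewrite /tbr /e1 /e2 ?c3E => hd; move/eqP: h0; apply; rewrite -[0]hd; ring.
move=> J J0 JD JZ JB.
have Jsc : forall c v, c != 0 -> J (c *: v) -> J v.
  by move=> c v hc hv; have := JZ c^-1 _ hv; rewrite scalerA mulVf // scale1r.
have Jall : J (e0 K) -> forall v, J v.
  move=> he0.
  have he1 : J (e1 K).
    apply: (@Jsc d1) => //; have -> : d1 *: e1 K = tbr d0 d1 d2 (e2 K) (e0 K) by comp.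
    exact: JB.
  have he2 : J (e2 K).
    apply: (@Jsc (- d2)); first by rewrite oppr_eq0.
    have -> : - d2 *: e2 K = tbr d0 d1 d2 (e1 K) (e0 K) by comp.
    exact: JB.
  move=> v; have -> : v = c3 v 0 *: e0 K + c3 v 1 *: e1 K + c3 v 2 *: e2 K.
    by apply: mk3_eq; rewrite /e0 /e1 /e2 ?c3E; ring.
  by apply: (JD); [apply: (JD)|]; apply: (JZ).
case: (classic (forall u, J u -> u = 0)) => [h|h]; [left => //|right].
have [u [hu hu0]] : exists u, J u /\ u != 0.
  apply: NNPP => hn; apply: h => u hu; apply: NNPP => hu0; apply: hn; exists u.
  by split => //; apply/eqP.
apply: Jall.
have [hc0|hc0] := eqVneq (c3 u 0) 0; last first.
  apply: (@Jsc (d1 * d2 * c3 u 0)); first by rewrite !mulf_neq0.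
  have -> : (d1 * d2 * c3 u 0) *: e0 K = (d1 * d2) *: u + tbr d0 d1 d2 (e0 K) (tbr d0 d1 d2 (e0 K) u).
    by rewrite /e0; comp.
  by apply: (JD); [apply: (JZ) | apply: (JB); apply: (JB)].
have [hc1|hc1] := eqVneq (c3 u 1) 0; last first.
  have he1 : J (e1 K).
    apply: (@Jsc (d0 * d2 * c3 u 1)); first by rewrite !mulf_neq0.
    have -> : (d0 * d2 * c3 u 1) *: e1 K = (d0 * d2) *: u + tbr d0 d1 d2 (e1 K) (tbr d0 d1 d2 (e1 K) u).
      by rewrite /e1; comp.
    by apply: (JD); [apply: (JZ) | apply: (JB); apply: (JB)].
  apply: (@Jsc (- d0)); first by rewrite oppr_eq0.
  have -> : - d0 *: e0 K = tbr d0 d1 d2 (e2 K) (e1 K) by comp.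
  exact: JB.
have [hc2|hc2] := eqVneq (c3 u 2) 0.
  by exfalso; move/eqP: hu0; apply; rewrite (mk3E u) hc0 hc1 hc2; apply/rowP => i; rewrite !mxE; case: i => [[|[|[|]]] ?].
have he2 : J (e2 K).
  apply: (@Jsc (d0 * d1 * c3 u 2)); first by rewrite !mulf_neq0.
  have -> : (d0 * d1 * c3 u 2) *: e2 K = (d0 * d1) *: u + tbr d0 d1 d2 (e2 K) (tbr d0 d1 d2 (e2 K) u).
    by rewrite /e2; comp.
  by apply: (JD); [apply: (JZ) | apply: (JB); apply: (JB)].
apply: (@Jsc d0) => //.
have -> : d0 *: e0 K = tbr d0 d1 d2 (e1 K) (e2 K) by comp.
exact: JB.
Qed.

Lemma caseB (k : fieldType) (I : Ons k -> Prop) : ons_maximal_ideal I ->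
  (exists x y, ~ I (ons_bracket x y)) ->
  exists K : fieldExtType k, quotient_simple3_over K I.
Proof.
move=> hm hn; have hI : ons_ideal I by case: (hm).
have MI := modI hm hn.
have [pi [hirr hpiS]] := Sirr hm hn.
case: (irredp_FAdjoin hirr) => K dimK [z hz hfull].
exists K.
have evX : (horner_alg z) 'X = z by exact: horner_algX.
have evC : forall c, (horner_alg z) c%:P = c%:A by move=> c; exact: horner_algC.
have evpi : (horner_alg z) pi = 0 by apply/eqP; exact: hz.
have evker : forall q, (horner_alg z) q = 0 -> pi %| q.
  move=> q hq; apply: NNPP => /negP hnd.
  have hc : coprimep pi q by rewrite irreducible_poly_coprime.
  rewrite -(coprimep_map (in_alg K)) in hc.
  have : (horner_alg z) q != 0 := coprimep_root hc hz.
  by rewrite hq eqxx.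
have evsurj : forall c : K, exists q, (horner_alg z) q = c.
  move=> c; have : c \in <<1; z>>%VS by rewrite hfull memvf.
  by case/Fadjoin_polyP => p /polyOver1P [q ->] ->; exists q.
have Sdiv : forall q, pi %| q -> forall y, I (q *: y).
  move=> q hq y; rewrite -(divpK hq) -scalerA; exact: MI.
have hz0 : z != 0.
  apply/eqP => hz0; apply: (notX hm hn); apply: Sdiv; apply: evker.
  by rewrite evX.
have hz1 : z - 1 != 0.
  apply/eqP => hz1; apply: (notX1 hm hn); apply: Sdiv; apply: evker.
  by rewrite rmorphB rmorph1 /= evX.
pose phi := fun x : Ons k => map_mx (horner_alg z) x.
have phiD : forall x y, phi (x + y) = phi x + phi y.
  by move=> x y; apply: mk3_eq; rewrite !(c3map, c3D) rmorphD.
have phiZ : forall (a : k) x, phi (ons_scale a x) = (a%:A : K) *: phi x.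
  by move=> a x; apply: mk3_eq; rewrite osE !(c3map, c3Z) rmorphM /= evC.
have phiQ : forall q x, phi (q *: x) = (horner_alg z) q *: phi x.
  by move=> q x; apply: mk3_eq; rewrite !(c3map, c3Z) rmorphM.
have phiB : forall x y, phi (ons_bracket x y) = tbr (-1) z (-(z - 1)) (phi x) (phi y).
  move=> x y; rewrite obrE; apply: mk3_eq; rewrite /tbr ?(c3map, c3E);
  rewrite ?(rmorphM, rmorphB, rmorphN, rmorph1) /= ?evX; ring.
have phisurj : forall v, exists x, phi x = v.
  move=> v; have [q0 h0] := evsurj (c3 v 0); have [q1 h1] := evsurj (c3 v 1).
  have [q2 h2] := evsurj (c3 v 2).
  by exists (mk3 q0 q1 q2); apply: mk3_eq; rewrite !c3map ?c3E.
have ker1 : forall x, phi x = 0 -> I x.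
  move=> x hx.
  have hi : forall i, pi %| c3 x i.
    by move=> i; apply: evker; rewrite -c3map -/(phi x) hx c30.
  have -> : x = pi *: mk3 (c3 x 0 %/ pi) (c3 x 1 %/ pi) (c3 x 2 %/ pi).
    by apply: mk3_eq; rewrite ?c3E mulrC divpK.
  exact: hpiS.
have hsimp : simple_lie (tbr (-1) z (-(z - 1))).
  by apply: tbr_simple; rewrite ?oppr_eq0 ?oner_eq0.

exists phi, (tbr (-1) z (-(z - 1))); split => //.
split => // x; split; first exact: ker1.
move=> hx; case: (hm) => _ [w hw] _.
case: (hsimp) => _ _ hJ.
have := hJ (fun v => exists y, I y /\ phi y = v).
case.
- by exists 0; split; [apply: idl0 | rewrite /phi map_mx0].
- by move=> u v [yu [hu <-]] [yv [hv <-]]; exists (yu + yv); split; [apply: idlD|].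
- move=> c u [y [hy <-]]; have [q <-] := evsurj c.
  by exists (q *: y); split; [apply: MI|].
- move=> u v [y [hy <-]]; have [x' <-] := phisurj u.
  by exists (ons_bracket x' y); split; [apply: idlB|].
- by move=> h; apply: h; exists x.
- move=> h; exfalso; apply: hw.
  have [y [hy hyw]] := h (phi w).
  have -> : w = (w - y) + y by rewrite subrK.
  apply: idlD => //; apply: ker1.
  have phiN : forall x, phi (- x) = - phi x.
    by move=> x0; apply: mk3_eq; rewrite !(c3map, c3N) rmorphN.
  by rewrite phiD phiN hyw subrr.
Qed.

Local Close Scope ring_scope.

Theorem corollary4p7 (k : fieldType) (hk : ~~ (2%N \in [pchar k])%R)
  (I : Ons k -> Prop) (hI : ons_maximal_ideal I) :
  quotient_dim1 I \/ exists K : fieldExtType k, quotient_simple3_over K I.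
Proof.
case: (classic (forall x y, I (ons_bracket x y))) => h.
  by left; apply: caseA.
right; apply: caseB => //.
apply: NNPP => hn; apply: h => x y; apply: NNPP => hxy; apply: hn; by exists x, y.
Qed.
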